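(* Let $t$ be a table with $n$ rows, and fix a predicate such that exactly $pn$ rows of $t$ satisfy it, where $p\in(0,1]$. Draw a sample of $k\ge 1$ rows from $t$ uniformly at random with replacement (i.e., $k$ i.i.d. uniform draws), let $\hat X$ be the number of sampled rows satisfying the predicate, and estimate the cardinality by $\mathrm{est}=\frac{n}{k}\hat X$, the true cardinality being $\mathrm{true}=pn$. Let $\sigma^2=p(1-p)$. Then for every $q\ge 1$, $$\mathbb{P}(\text{Q-error}\le q)\ \ge\ 1-\Omega-\Psi,$$ where $$\Omega=\min\Bigg(\Big(\frac{e^{q-1}}{q^{q}}\Big)^{pk},\ \exp\Big(-\frac{k(pq-p)^2}{2\sigma^2+2(pq-p)/3}\Big)\Bigg),$$ $$\Psi=\min\Bigg(\Big(e^{\frac1q-1}\,q^{\frac1q}\Big)^{pk},\ \exp\Big(-\frac{k(p-p/q)^2}{2\sigma^2+2(p-p/q)/3}\Big)\Bigg).$$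
   Context: The Q-error of an estimate is $\max\big(\frac{\mathrm{true}'}{\mathrm{est}'},\frac{\mathrm{est}'}{\mathrm{true}'}\big)$, where $\mathrm{est}'=\max(\mathrm{est},1)$ and $\mathrm{true}'=\max(\mathrm{true},1)$ (to avoid division by zero). $\Omega$ bounds the probability of over-estimation ($\mathrm{est}\ge q\cdot\mathrm{true}$) and $\Psi$ the probability of under-estimation ($\mathrm{est}\le \mathrm{true}/q$). *)

(* Defs.v *)
From mathcomp Require Import all_boot all_order all_algebra.
From mathcomp Require Import reals.
From mathcomp Require Import sequences exp.
Set Implicit Arguments. Unset Strict Implicit. Unset Printing Implicit Defensive.
Import Order.TTheory GRing.Theory Num.Theory.
Local Open Scope ring_scope.

(* A sample of k rows drawn with replacement from a table with rows 'I_n is a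
   function s : 'I_k -> 'I_n; k i.i.d. uniform draws = uniform distribution on
   {ffun 'I_k -> 'I_n}. *)
Definition sample_prob (R : realType) (n k : nat)
  (E : pred {ffun 'I_k -> 'I_n}) : R :=
  #|[set s | E s]|%:R / #|{ffun 'I_k -> 'I_n}|%:R.

Definition Xhat (n k : nat) (P : pred 'I_n) (s : {ffun 'I_k -> 'I_n}) : nat :=
  #|[set j : 'I_k | P (s j)]|.

Definition sample_est (R : realType) (n k : nat) (X : nat) : R :=
  n%:R / k%:R * X%:R.

Definition qerror (R : realType) (est tru : R) : R :=
  let e := Num.max est 1 in let t := Num.max tru 1 in
  Num.max (t / e) (e / t).

Definition Omega_bound (R : realType) (p q : R) (k : nat) : R :=
  let s2 := p * (1 - p) in
  Num.min ((expR (q - 1) / q `^ q) `^ (p * k%:R))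
          (expR (- (k%:R * (p * q - p) ^+ 2 / (2 * s2 + 2 * (p * q - p) / 3)))).

Definition Psi_bound (R : realType) (p q : R) (k : nat) : R :=
  let s2 := p * (1 - p) in
  Num.min ((expR (q^-1 - 1) * q `^ (q^-1)) `^ (p * k%:R))
          (expR (- (k%:R * (p - p / q) ^+ 2 / (2 * s2 + 2 * (p - p / q) / 3)))).

(* Main.v *)
Require Import Defs.
From mathcomp Require Import all_boot all_order all_algebra.
From mathcomp Require Import reals.
From mathcomp Require Import sequences exp.
From mathcomp Require Import all_classical topology normedtype derive realfun.
From mathcomp Require Import ring lra.
Import Order.TTheory GRing.Theory Num.Theory numFieldNormedType.Exports.
Local Open Scope ring_scope.

Section S.
Variable R : realType.

Lemma mono0 (f df : R -> R) : (forall x : R, is_derive x 1 f (df x)) ->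
  (forall x, 0 <= x -> 0 <= df x) -> forall x, 0 <= x -> f 0 <= f x.
Proof.
move=> hd hdf x x0.
have [c] : exists2 c, c \in `[0, x]%R & f x - f 0 = df c * (x - 0).
  apply: MVT_segment => //.
  apply/continuous_subspaceT=> r.
  apply/differentiable_continuous/derivable1_diffP.
  by case: (hd r).
rewrite in_itv /= => /andP[c0 cx] h.
by rewrite -subr_ge0 h subr0 mulr_ge0 // hdf.
Qed.

Lemma mono0' (f df : R -> R) : f 0 = 0 -> (forall x : R, is_derive x 1 f (df x)) ->
  (forall x, 0 <= x -> 0 <= df x) -> forall x, 0 <= x -> 0 <= f x.
Proof. by move=> f0 hd hdf x x0; rewrite -f0; apply: mono0. Qed.

Lemma phi_ge (l : R) : 0 <= l -> l * l / 2 <= expR l - 1 - l.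
Proof.
move=> l0; rewrite -subr_ge0.
apply: (@mono0' (fun l => expR l - 1 - l - l * l / 2) (fun l => expR l - 1 - l)) => //.
- by rewrite expR0 mul0r; lra.
- by move=> x; apply: is_derive_eq; rewrite /GRing.scale /=; lra.
- by move=> x _; have := expR_ge1Dx x; lra.
Qed.

Lemma expN_le (y : R) : 0 <= y -> expR (- y) <= 1 - y + y * y / 2.
Proof.
move=> y0; rewrite -subr_ge0.
apply: (@mono0' (fun y => 1 - y + y * y / 2 - expR (- y)) (fun y => -1 + y + expR (- y))) => //.
- by rewrite oppr0 expR0 mul0r; lra.
- by move=> x; apply: is_derive_eq; rewrite /GRing.scale /=; lra.
- by move=> x _; have := expR_ge1Dx (- x); lra.
Qed.

Lemma convL (x l : R) : 0 <= x <= 1 -> 0 <= l ->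
  expR (l * x) - 1 <= x * (expR l - 1).
Proof.
move=> /andP[x0 x1] l0; rewrite -subr_ge0.
apply: (@mono0' (fun l => x * (expR l - 1) - (expR (l * x) - 1))
   (fun l => x * expR l - x * expR (l * x))) => //.
- by rewrite mul0r expR0; lra.
- move=> y; apply: is_derive_eq; rewrite /GRing.scale /=. lra.
- move=> y y0; rewrite subr_ge0 ler_wpM2l // ler_expR.
  by rewrite ler_piMr.
Qed.

Lemma convK (x l : R) : 0 <= x <= 1 -> 0 <= l ->
  expR (l * x) - 1 - l * x <= x * x * (expR l - 1 - l).
Proof.
move=> hx l0; rewrite -subr_ge0.
apply: (@mono0' (fun l => x * x * (expR l - 1 - l) - (expR (l * x) - 1 - l * x))
   (fun l => x * (x * (expR l - 1) - (expR (l * x) - 1)))) => //.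
- by rewrite !mul0r expR0; lra.
- move=> y; apply: is_derive_eq; rewrite /GRing.scale /=. lra.
- move=> y y0; case/andP: hx => x0 x1; rewrite mulr_ge0 // subr_ge0.
  by apply: convL => //; rewrite x0 x1.
Qed.

Lemma N2 (l : R) : 0 <= l -> 0 <= 2 - 2 * expR l + 2 * l * expR l.
Proof.
move=> l0.
apply: (@mono0' (fun l => 2 - 2 * expR l + 2 * l * expR l) (fun l => 2 * l * expR l)) => //.
- by rewrite expR0; lra.
- move=> y; apply: is_derive_eq; rewrite /GRing.scale /=. lra.
- by move=> y y0; rewrite !mulr_ge0 // expR_ge0.
Qed.

Lemma N1 (l : R) : 0 <= l -> 0 <= 2 * l + 4 - 4 * expR l + 2 * l * expR l.
Proof.
move=> l0.
apply: (@mono0' (fun l => 2 * l + 4 - 4 * expR l + 2 * l * expR l)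
   (fun l => 2 - 2 * expR l + 2 * l * expR l)) => //.
- by rewrite expR0; lra.
- move=> y; apply: is_derive_eq; rewrite /GRing.scale /=. lra.
- by move=> y y0; apply: N2.
Qed.

Lemma N0 (l : R) : 0 <= l -> 0 <= 3 * (l * l) - (6 - 2 * l) * (expR l - 1 - l).
Proof.
move=> l0.
apply: (@mono0' (fun l => 3 * (l * l) - (6 - 2 * l) * (expR l - 1 - l))
   (fun l => 2 * l + 4 - 4 * expR l + 2 * l * expR l)) => //.
- by rewrite expR0; lra.
- move=> y; apply: is_derive_eq; rewrite /GRing.scale /=. lra.
- by move=> y y0; apply: N1.
Qed.

Lemma phiD (l : R) : 0 <= l < 3 -> expR l - 1 - l <= 3 * (l * l) / (6 - 2 * l).
Proof.
move=> /andP[l0 l3]; have h := @N0 l l0.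
have d0 : 0 < 6 - 2 * l by lra.
rewrite ler_pdivlMr // mulrC; lra.
Qed.

Lemma Xlem (x l : R) : -1 <= x <= 1 -> 0 <= l ->
  expR (l * x) <= 1 + l * x + x * x * (expR l - 1 - l).
Proof.
move=> /andP[x1 x2] l0; case: (lerP 0 x) => x0.
  have := @convK x l; rewrite x0 x2 => /(_ isT l0); lra.
have nx : 0 <= - x by lra.
have h1 := @expN_le (l * - x) (mulr_ge0 l0 nx).
have h2 := ler_wpM2l (mulr_ge0 nx nx) (@phi_ge l l0).
rewrite mulrN opprK in h1; rewrite mulrNN in h2. lra.
Qed.

Lemma MGF (p l : R) : 0 <= p <= 1 -> 0 <= l ->
  (1 - p) * expR (- (l * p)) + p * expR (l * (1 - p)) <=
  expR (p * (1 - p) * (expR l - 1 - l)).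
Proof.
move=> /andP[p0 p1] l0.
have a1 : -1 <= - p <= 1 by apply/andP; split; lra.
have a2 : -1 <= 1 - p <= 1 by apply/andP; split; lra.
have q1 : 0 <= 1 - p by lra.
have h1 := ler_wpM2l q1 (@Xlem (- p) l a1 l0).
have h2 := ler_wpM2l p0 (@Xlem (1 - p) l a2 l0).
rewrite mulrN in h1.
apply: le_trans (expR_ge1Dx _). lra.
Qed.

Lemma Bern (p t : R) : 0 < p < 1 -> 0 <= t ->
  ((1 - p) * expR (- (t / (p * (1 - p) + t / 3) * p)) +
   p * expR (t / (p * (1 - p) + t / 3) * (1 - p))) *
  expR (- (t / (p * (1 - p) + t / 3) * t)) <=
  expR (- (t ^+ 2 / (2 * (p * (1 - p)) + 2 * t / 3))).
Proof.
move=> /andP[p0 p1] t0.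
set s := p * (1 - p); have s0 : 0 < s by rewrite mulr_gt0 // subr_gt0.
set D := s + t / 3; have D0 : 0 < D by rewrite /D; lra.
set l := t / D.
have l0 : 0 <= l by rewrite divr_ge0 // ltW.
have l3 : l < 3.
  by rewrite /l ltr_pdivrMr // /D; lra.
apply: le_trans.
  apply: ler_wpM2r; first exact: expR_ge0.
  by apply: MGF => //; apply/andP; split; lra.
rewrite -expRD ler_expR.
apply: le_trans.
  apply: lerD; last exact: lexx.
  apply: ler_wpM2l; first exact: ltW.
  by apply: phiD; rewrite l0 l3.
have d0 : 6 - 2 * l != 0 by apply/negP => /eqP; lra.
have e : 2 * s + 2 * t / 3 = 2 * D by rewrite /D; lra.
rewrite e /l le_eqVlt; apply/orP; left; apply/eqP.
have e2 : 6 - 2 * (t / D) = 6 * s / D.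
  by rewrite /D; field; apply/lt0r_neq0; lra.
rewrite -/s e2; field; by rewrite !lt0r_neq0.
Qed.

Lemma s0core (t : R) : 0 <= t ->
  expR (- (t / (0 + t / 3) * t)) <= expR (- (t ^+ 2 / (0 + 2 * t / 3))).
Proof.
move=> t0; rewrite !add0r ler_expR lerN2.
case: (eqVneq t 0) => [->|tn0]; first by rewrite !mul0r mulr0 expr0n /= mul0r.
have tp : 0 < t by rewrite lt0r tn0.
have -> : t / (t / 3) = 3 by field.
have -> : t ^+ 2 / (2 * t / 3) = 3 * t / 2 by field.
lra.
Qed.

Lemma Bern' (p t : R) : 0 <= p <= 1 -> 0 <= t ->
  ((1 - p) * expR (- (t / (p * (1 - p) + t / 3) * p)) +
   p * expR (t / (p * (1 - p) + t / 3) * (1 - p))) *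
  expR (- (t / (p * (1 - p) + t / 3) * t)) <=
  expR (- (t ^+ 2 / (2 * (p * (1 - p)) + 2 * t / 3))).
Proof.
move=> /andP[p0 p1] t0.
case: (eqVneq p 0) => [->|pn0].
  rewrite !mul0r subr0 !mul1r !mulr0 oppr0 expR0 addr0 mul1r.
  by apply: s0core.
case: (eqVneq p 1) => [->|pn1].
  rewrite subrr !mulr0 !mul0r !mul1r expR0 add0r mul1r.
  by apply: s0core.
apply: Bern => //; apply/andP; split.
  by rewrite lt0r pn0.
by rewrite lt_neqAle pn1.
Qed.

End S.

Section Count.
Variables (R : realType) (n k : nat) (P : pred 'I_n) (p : R).
Hypothesis hn : (0 < n)%N.
Hypothesis hP : #|P|%:R = p * n%:R :> R.

Lemma Xhat_sum (s : {ffun 'I_k -> 'I_n}) :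
  (Xhat P s)%:R = \sum_j ((P (s j)) : nat)%:R :> R.
Proof.
rewrite /Xhat -sum1_card natr_sum [LHS]big_mkcond /=.
by apply: eq_bigr => j _; rewrite inE; case: (P (s j)).
Qed.

Lemma count_bound (mu b : R) (E : pred {ffun 'I_k -> 'I_n}) :
  (forall s, E s -> 0 <= mu * ((Xhat P s)%:R - k%:R * b)) ->
  sample_prob R E <= (p * expR (mu * (1 - b)) + (1 - p) * expR (- (mu * b))) ^+ k.
Proof.
move=> hE.
rewrite /sample_prob card_ffun !card_ord.
have hnk : 0 < (n ^ k)%:R :> R by rewrite ltr0n expn_gt0 hn.
rewrite ler_pdivrMr //.
pose G (i : 'I_n) := expR (mu * ((P i)%:R - b)).
pose F (j : 'I_k) := G.
apply: (@le_trans _ _ (\sum_(s : {ffun 'I_k -> 'I_n}) \prod_j F j (s j))).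
  rewrite -sum1_card natr_sum big_mkcond /=.
  apply: ler_sum => s _; rewrite inE.
  have -> : \prod_j F j (s j) = expR (mu * ((Xhat P s)%:R - k%:R * b)).
    rewrite /F /G -expR_sum; congr expR.
    rewrite -mulr_sumr; congr (_ * _).
    by rewrite sumrB sumr_const card_ord Xhat_sum mulr_natl.
  case: (E s) (hE s) => [/(_ isT) h|_]; last exact: expR_ge0.
  by apply: le_trans (expR_ge1Dx _); lra.
rewrite -bigA_distr_bigA /= /F prodr_const card_ord.
have -> : \sum_(i : 'I_n) G i =
   n%:R * (p * expR (mu * (1 - b)) + (1 - p) * expR (- (mu * b))).
  rewrite (bigID P) /=.
  rewrite (eq_bigr (fun=> expR (mu * (1 - b)))); last by move=> i; rewrite /G => ->.
  rewrite [X in _ + X](eq_bigr (fun=> expR (- (mu * b)))); last first.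
    by move=> i /negbTE; rewrite /G => ->; rewrite /= sub0r mulrN.
  rewrite !sumr_const.
  have hc := cardC P; rewrite card_ord in hc.
  have hc2 : (#|P| + #|[predC P]|)%:R = n%:R :> R by rewrite hc.
  rewrite natrD in hc2.
  have -> : #|(fun i => ~~ P i)| = #|[predC P]| by [].
  rewrite -[_ *+ #|P|]mulr_natr -[_ *+ #|[predC P]|]mulr_natr.
  have h3 : #|[predC P]|%:R = n%:R - p * n%:R :> R by rewrite -hP; lra.
  by rewrite h3 hP; ring.
by rewrite exprMn natrX mulrC.
Qed.

Lemma card_sum (E : pred {ffun 'I_k -> 'I_n}) :
  #|[set s | E s]|%:R = \sum_s ((E s : nat)%:R) :> R.
Proof.
rewrite -sum1_card natr_sum [LHS]big_mkcond /=.
by apply: eq_bigr => s _; rewrite inE; case: (E s).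
Qed.

Lemma prob_union (G E1 E2 : pred {ffun 'I_k -> 'I_n}) :
  (forall s, [|| G s, E1 s | E2 s]) ->
  1 - sample_prob R E1 - sample_prob R E2 <= sample_prob R G.
Proof.
move=> hs; rewrite /sample_prob.
set N := #|{ffun 'I_k -> 'I_n}|.
have N0 : 0 < N%:R :> R by rewrite /N card_ffun !card_ord ltr0n expn_gt0 hn.
have e : 1 - #|[set s | E1 s]|%:R / N%:R - #|[set s | E2 s]|%:R / N%:R
   = (N%:R - #|[set s | E1 s]|%:R - #|[set s | E2 s]|%:R) / N%:R :> R.
  by field; apply: lt0r_neq0.
rewrite e; apply: ler_wpM2r; first by rewrite invr_ge0 ltW.
have hN : N%:R = \sum_(s : {ffun 'I_k -> 'I_n}) (1 : R) by rewrite sumr_const.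
suff : N%:R <= #|[set s | G s]|%:R + #|[set s | E1 s]|%:R + #|[set s | E2 s]|%:R :> R.
  by lra.
rewrite hN !card_sum -!big_split /=; apply: ler_sum => s _.
by case/or3P: (hs s) => ->; case: (G s); case: (E1 s); case: (E2 s) => /=; lra.
Qed.

Lemma pow_le (a b : R) : 0 <= a -> a <= b -> a ^+ k <= b ^+ k.
Proof. move=> a0 ab; apply: lerXn2r => //; rewrite nnegrE //; exact: le_trans ab. Qed.
End Count.

Theorem theorem1 (R : realType) (n k : nat) (P : pred 'I_n) (p q : R)
  (hn : (0 < n)%N) (hk : (1 <= k)%N)
  (hp0 : 0 < p) (hp1 : p <= 1)
  (hP : #|P|%:R = p * n%:R :> R)
  (hq : 1 <= q) :
  sample_prob R (fun s : {ffun 'I_k -> 'I_n} =>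
     qerror (sample_est R n k (Xhat P s)) (p * n%:R) <= q)
  >= 1 - Omega_bound p q k - Psi_bound p q k.
Proof.
have q0 : 0 < q by apply: lt_le_trans hq; exact: ltr01.
have qpos : q \in Num.pos by rewrite posrE.
have k0 : 0 < k%:R :> R by rewrite ltr0n.
have n0 : 0 < n%:R :> R by rewrite ltr0n.
set T := p * n%:R.
have hT : 1 <= T.
  have : 0 < #|P|%:R :> R by rewrite hP mulr_gt0.
  by rewrite ltr0n => h; rewrite /T -hP ler1n.
pose E1 := fun s : {ffun 'I_k -> 'I_n} => k%:R * (p * q) < (Xhat P s)%:R :> R.
pose E2 := fun s : {ffun 'I_k -> 'I_n} => (Xhat P s)%:R < k%:R * (p / q) :> R.
have good : forall s, ~~ E1 s -> ~~ E2 s ->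
    qerror (sample_est R n k (Xhat P s)) T <= q.
  move=> s; rewrite /E1 /E2 -!leNgt => h1 h2.
  set x := (Xhat P s)%:R in h1 h2 *.
  have hest1 : sample_est R n k (Xhat P s) <= q * T.
    rewrite /sample_est -/x.
    apply: (@le_trans _ _ (n%:R / k%:R * (k%:R * (p * q)))).
      by apply: ler_wpM2l => //; rewrite divr_ge0 // ltW.
    by rewrite /T le_eqVlt; apply/orP; left; apply/eqP; field; apply: lt0r_neq0.
  have hest2 : T / q <= sample_est R n k (Xhat P s).
    rewrite /sample_est -/x.
    apply: (@le_trans _ _ (n%:R / k%:R * (k%:R * (p / q)))); last first.
      by apply: ler_wpM2l => //; rewrite divr_ge0 // ltW.
    rewrite /T le_eqVlt; apply/orP; left; apply/eqP; field.
    by apply/andP; split; apply: lt0r_neq0.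
  rewrite /qerror /=.
  set est := sample_est R n k (Xhat P s) in hest1 hest2 *.
  have -> : Num.max T 1 = T by apply: max_l.
  have e1 : 1 <= Num.max est 1 by rewrite le_max lexx orbT.
  have e2 : est <= Num.max est 1 by rewrite le_max lexx.
  have e3 : Num.max est 1 <= q * T.
    rewrite ge_max hest1 /=; apply: (le_trans hT).
    by rewrite ler_peMl // (le_trans ler01 hT).
  have ep : 0 < Num.max est 1 by apply: (lt_le_trans _ e1); exact: ltr01.
  have Tp : 0 < T by apply: (lt_le_trans _ hT); exact: ltr01.
  rewrite ge_max; apply/andP; split.
    rewrite ler_pdivrMr // mulrC.
    have h := ler_wpM2l (ltW q0) (le_trans hest2 e2).
    by rewrite mulrCA mulfV ?mulr1 ?lt0r_neq0 // mulrC in h.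
  by rewrite ler_pdivrMr // mulrC.
have hu := @prob_union R n k hn
  (fun s => qerror (sample_est R n k (Xhat P s)) T <= q) E1 E2.
have hs : forall s, [|| qerror (sample_est R n k (Xhat P s)) T <= q, E1 s | E2 s].
  move=> s; case h1: (E1 s); rewrite ?orbT //.
  case h2: (E2 s); rewrite ?orbT //.
  by rewrite good ?h1 ?h2.
have hu2 := hu hs.
have lnq0 : 0 <= ln q by apply: ln_ge0.
have hp01 : 0 <= p <= 1 by rewrite hp1 ltW.
have hO : sample_prob R E1 <= Omega_bound p q k.
  rewrite /Omega_bound le_min; apply/andP; split.
    apply: (le_trans (@count_bound R n k P p hn hP (ln q) (p * q) E1 _)).
      move=> s /= h; apply: mulr_ge0 => //.
      by rewrite subr_ge0 ltW.
    have -> : (expR (q - 1) / q `^ q) `^ (p * k%:R) =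
              expR (p * (q - 1) - p * q * ln q) ^+ k.
      have -> : q `^ q = expR (q * ln q) by rewrite /powR gt_eqF.
      by rewrite -expRB -expRM -expRM_natr; congr expR; ring.
    apply: pow_le.
      by apply: addr_ge0; apply: mulr_ge0; rewrite ?expR_ge0 ?subr_ge0 //; exact: ltW.
    rewrite mulrBr mulr1 expRD lnK //.
    have -> : p * (q - 1) - p * q * ln q = p * (q - 1) + - (ln q * (p * q)) by ring.
    rewrite expRD.
    set E := expR (- (ln q * (p * q))).
    have -> : p * (q * E) + (1 - p) * E = (1 + p * (q - 1)) * E by ring.
    by apply: ler_wpM2r; [exact: expR_ge0 | exact: expR_ge1Dx].
  set t := p * q - p.
  have t0 : 0 <= t by rewrite /t subr_ge0 ler_peMr // ltW.
  have s0 : 0 <= p * (1 - p) by rewrite mulr_ge0 ?subr_ge0 // ltW.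
  have B := @Bern' R p t hp01 t0.
  set l := t / (p * (1 - p) + t / 3) in B *.
  have l0 : 0 <= l by rewrite /l divr_ge0 // addr_ge0 // divr_ge0.
  apply: (le_trans (@count_bound R n k P p hn hP l (p * q) E1 _)).
    move=> s /= h; apply: mulr_ge0 => //.
    by rewrite subr_ge0 ltW.
  have -> : expR (- (k%:R * t ^+ 2 / (2 * (p * (1 - p)) + 2 * t / 3))) =
      expR (- (t ^+ 2 / (2 * (p * (1 - p)) + 2 * t / 3))) ^+ k.
    by rewrite -expRM_natr; congr expR; ring.
  apply: pow_le.
    by apply: addr_ge0; apply: mulr_ge0; rewrite ?expR_ge0 ?subr_ge0 //; exact: ltW.
  apply: le_trans B; rewrite le_eqVlt; apply/orP; left; apply/eqP.
  rewrite (_ : l * (1 - p * q) = l * (1 - p) + - (l * t)); last by rewrite /t; ring.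
  rewrite (_ : - (l * (p * q)) = - (l * p) + - (l * t)); last by rewrite /t; ring.
  by rewrite !expRD; ring.
have hPs : sample_prob R E2 <= Psi_bound p q k.
  rewrite /Psi_bound le_min; apply/andP; split.
    apply: (le_trans (@count_bound R n k P p hn hP (- ln q) (p / q) E2 _)).
      move=> s /= h; apply: mulr_le0; first by rewrite oppr_le0.
      by rewrite subr_le0 ltW.
    have -> : (expR (q^-1 - 1) * q `^ (q^-1)) `^ (p * k%:R) =
              expR (p / q - p + ln q * (p / q)) ^+ k.
      have -> : q `^ (q^-1) = expR (q^-1 * ln q) by rewrite /powR gt_eqF.
      by rewrite -expRD -expRM -expRM_natr; congr expR; ring.
    apply: pow_le.
      by apply: addr_ge0; apply: mulr_ge0; rewrite ?expR_ge0 ?subr_ge0 //; exact: ltW.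
    rewrite (_ : - ln q * (1 - p / q) = - ln q + ln q * (p / q)); last by ring.
    rewrite (_ : - (- ln q * (p / q)) = ln q * (p / q)); last by ring.
    rewrite expRD expRN lnK // expRD.
    set E := expR (ln q * (p / q)).
    have -> : p * (q^-1 * E) + (1 - p) * E = (1 + (p / q - p)) * E by ring.
    by apply: ler_wpM2r; [exact: expR_ge0 | exact: expR_ge1Dx].
  set t := p - p / q.
  have t0 : 0 <= t.
    by rewrite /t subr_ge0 ler_pdivrMr // -{1}(mulr1 p) ler_wpM2l // ltW.
  have hp01' : 0 <= 1 - p <= 1 by apply/andP; split; lra.
  have B := @Bern' R (1 - p) t hp01' t0.
  have e : (1 - p) * (1 - (1 - p)) = p * (1 - p) by ring.
  rewrite e in B.
  have s0 : 0 <= p * (1 - p) by rewrite mulr_ge0 ?subr_ge0 // ltW.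
  set l := t / (p * (1 - p) + t / 3) in B *.
  have l0 : 0 <= l by rewrite /l divr_ge0 // addr_ge0 // divr_ge0.
  apply: (le_trans (@count_bound R n k P p hn hP (- l) (p / q) E2 _)).
    move=> s /= h; apply: mulr_le0; first by rewrite oppr_le0.
    by rewrite subr_le0 ltW.
  have -> : expR (- (k%:R * t ^+ 2 / (2 * (p * (1 - p)) + 2 * t / 3))) =
      expR (- (t ^+ 2 / (2 * (p * (1 - p)) + 2 * t / 3))) ^+ k.
    by rewrite -expRM_natr; congr expR; ring.
  apply: pow_le.
    by apply: addr_ge0; apply: mulr_ge0; rewrite ?expR_ge0 ?subr_ge0 //; exact: ltW.
  apply: le_trans B; rewrite le_eqVlt; apply/orP; left; apply/eqP.
  rewrite (_ : - l * (1 - p / q) = - (l * (1 - p)) + - (l * t)); last by rewrite /t; ring.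
  rewrite (_ : - (- l * (p / q)) = l * (1 - (1 - p)) + - (l * t)); last by rewrite /t; ring.
  by rewrite !expRD; ring.
apply: le_trans hu2; lra.
Qed.
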